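(* Let $(e_n)_n$ be the canonical basis of $\ell^1(\mathbb{N})$. Let $\alpha(t)=t$ for $t\in[0,\tfrac12]$ and $\alpha(t)=1-t$ for $t\in[\tfrac12,1]$, and for $n\in\mathbb{N}$ let $S_n=\{te_1+\alpha(t)e_{n+1}: t\in[0,1]\}$, $x_n=(\tfrac12-\tfrac1{2^n})e_1$ and $x_\infty=\tfrac12 e_1$. Let \[ X=\bigcup_{n\ge1}\Big(\tfrac{1}{2^{n+1}}S_n+x_n\Big)\cup\{x_\infty\} \] with the metric $d$ inherited from the $\ell^1$ norm. Then $(X,d)$ is a compact, $2$-quasiconvex metric space that is not an eikonal space.
   Context: A metric space $(X,d)$ is $C$-quasiconvex ($C\ge1$) if $d_I\le C d$, where $d_I(x,y)$ is the infimum of lengths of continuous curves in $X$ from $x$ to $y$ (length of $\gamma:[0,T]\to X$ being $\sup\sum_i d(\gamma(t_i),\gamma(t_{i+1}))$ over partitions). Local slope: $s[u](\bar x):=\limsup_{x\to\bar x}\frac{\max\{u(\bar x)-u(x),0\}}{d(\bar x,x)}$ (zero if $\bar x$ isolated). For nonempty open $\Omega\subsetneq X$, bounded continuous $\ell:\Omega\to\mathbb{R}$, $g:\partial\Omega\to\mathbb{R}$ satisfy (CC) if for all $x,y\in\partial\Omega$, $g(x)-g(y)\le\inf\{\int_0^T\ell(\gamma(t))dt\}$ over $1$-Lipschitz $\gamma:[0,T]\to\overline\Omega$ with $\gamma(0)=y$, $\gamma(T)=x$, $\gamma((0,T))\subset\Omega$ ($\inf\emptyset=+\infty$). $(X,d)$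 is an eikonal space if for every nonempty open $\Omega\subsetneq X$ and every such $(\ell,g)$ with $\inf\ell>0$ satisfying (CC) there is a continuous $u:\overline\Omega\to\mathbb{R}$ with $s[u]=\ell$ on $\Omega$ (slope computed in $\overline\Omega$) and $u=g$ on $\partial\Omega$. *)

(* Defs.v *)
From Stdlib Require Import Reals Lra List.
From Stdlib Require Import ClassicalEpsilon.
From Coquelicot Require Import Coquelicot.
Open Scope R_scope.

Section Generic.
(* A metric space is given as a carrier predicate [Xs] inside an ambient type [T]
   together with a distance [d] (only its values on [Xs] matter). *)
Context {T : Type} (Xs : T -> Prop) (d : T -> T -> R).

Definition open_in (V : T -> Prop) : Prop :=
  (forall x, V x -> Xs x) /\
  (forall x, V x -> exists r, 0 < r /\ forall y, Xs y -> d x y < r -> V y).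

Definition compact_sp : Prop :=
  forall C : (T -> Prop) -> Prop,
    (forall V, C V -> open_in V) ->
    (forall x, Xs x -> exists V, C V /\ V x) ->
    exists l : list (T -> Prop),
      (forall V, In V l -> C V) /\ (forall x, Xs x -> exists V, In V l /\ V x).

Definition closure_in (A : T -> Prop) (x : T) : Prop :=
  Xs x /\ forall r, 0 < r -> exists y, A y /\ d x y < r.

Definition boundary_in (Om : T -> Prop) (x : T) : Prop :=
  closure_in Om x /\ ~ Om x.

Definition cont_on (A : T -> Prop) (f : T -> R) : Prop :=
  forall x, A x -> forall eps, 0 < eps ->
    exists delta, 0 < delta /\ forall y, A y -> d x y < delta -> Rabs (f x - f y) < eps.

Definition curve_cont (gam : R -> T) (Tm : R) : Prop :=
  forall s, 0 <= s <= Tm -> forall eps, 0 < eps ->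
    exists delta, 0 < delta /\ forall t, 0 <= t <= Tm -> Rabs (t - s) < delta ->
      d (gam s) (gam t) < eps.

Fixpoint psum (f : nat -> R) (n : nat) : R :=
  match n with O => 0 | S k => psum f k + f k end.

Definition is_partition (Tm : R) (n : nat) (p : nat -> R) : Prop :=
  p O = 0 /\ p n = Tm /\ (forall i, (i < n)%nat -> p i <= p (S i)).

Definition curve_length (gam : R -> T) (Tm : R) : Rbar :=
  Lub_Rbar (fun s => exists n p, is_partition Tm n p /\
     s = psum (fun i => d (gam (p i)) (gam (p (S i)))) n).

Definition d_intr (x y : T) : Rbar :=
  Rbar_glb (fun L => exists (gam : R -> T) (Tm : R), 0 <= Tm /\
     (forall t, 0 <= t <= Tm -> Xs (gam t)) /\ curve_cont gam Tm /\
     gam 0 = x /\ gam Tm = y /\ L = curve_length gam Tm).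

Definition quasiconvex (C : R) : Prop :=
  1 <= C /\ forall x y, Xs x -> Xs y -> Rbar_le (d_intr x y) (Finite (C * d x y)).

Definition isolated_in (A : T -> Prop) (xb : T) : Prop :=
  exists r, 0 < r /\ forall x, A x -> d xb x < r -> x = xb.

Definition slope (A : T -> Prop) (u : T -> R) (xb : T) : Rbar :=
  match excluded_middle_informative (isolated_in A xb) with
  | left _ => Finite 0
  | right _ =>
      Rbar_glb (fun v => exists r, 0 < r /\
        v = Lub_Rbar (fun w => exists x, A x /\ x <> xb /\ d xb x < r /\
              w = Rmax (u xb - u x) 0 / d xb x))
  end.

Definition compat_CC (Om : T -> Prop) (l g : T -> R) : Prop :=
  forall x y, boundary_in Om x -> boundary_in Om y ->
    forall (gam : R -> T) (Tm : R), 0 <= Tm ->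
      (forall s t, 0 <= s <= Tm -> 0 <= t <= Tm -> d (gam s) (gam t) <= Rabs (s - t)) ->
      (forall t, 0 <= t <= Tm -> closure_in Om (gam t)) ->
      gam 0 = y -> gam Tm = x ->
      (forall t, 0 < t < Tm -> Om (gam t)) ->
      g x - g y <= RInt (fun t => l (gam t)) 0 Tm.

Definition eikonal_space : Prop :=
  forall (Om : T -> Prop) (l g : T -> R),
    open_in Om -> (exists x, Om x) -> (exists x, Xs x /\ ~ Om x) ->
    (exists M, forall x, Om x -> Rabs (l x) <= M) ->
    cont_on Om l ->
    Rbar_lt (Finite 0) (Glb_Rbar (fun v => exists x, Om x /\ v = l x)) ->
    compat_CC Om l g ->
    exists u : T -> R,
      cont_on (closure_in Om) u /\
      (forall x, Om x -> slope (closure_in Om) u x = Finite (l x)) /\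
      (forall x, boundary_in Om x -> u x = g x).

End Generic.

(* The concrete space inside l^1(N): sequences nat -> R, e n the n-th basis vector
   (index 0 unused; e 1 is e_1). *)
Definition seqR := nat -> R.
Definition e (n : nat) : seqR := fun k => if Nat.eqb k n then 1 else 0.
Definition dl1 (x y : seqR) : R := Series (fun k => Rabs (x k - y k)).

Definition alpha (t : R) : R := if Rle_dec t (1/2) then t else 1 - t.

Definition xn (n : nat) : seqR := fun k => (1/2 - 1 / 2 ^ n) * e 1 k.
Definition xinf : seqR := fun k => 1/2 * e 1 k.

Definition Xspace (z : seqR) : Prop :=
  (exists n, (1 <= n)%nat /\ exists t, 0 <= t <= 1 /\
     z = (fun k => 1 / 2 ^ (n + 1) * (t * e 1 k + alpha t * e (n + 1) k) + xn n k))
  \/ z = xinf.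

(* Main.v *)
Require Import Defs.
From Stdlib Require Import Reals Lra Lia List Arith Classical ClassicalEpsilon FunctionalExtensionality.
From Coquelicot Require Import Coquelicot.
Open Scope R_scope.

Definition Lp (n : nat) : R := 1/2 - 1/2^n.
Definition Cl (a b x : R) : R := Rmin (Rmax x a) b.
Definition tent (m : nat) (x : R) : R := Rmax 0 (Rmin (x - Lp m) (Lp (S m) - x)).
Definition phi (s : R) : seqR := fun k => match k with O => 0 | S O => s | S m => tent m s end.

Lemma hpos n : 0 < 1/2^n.
Proof. apply Rdiv_lt_0_compat; [lra| apply pow_lt; lra]. Qed.

Lemma hS n : 1/2^(S n) = 1/2^n/2.
Proof. simpl. field. apply pow_nonzero. lra. Qed.

Lemma Lp_S n : Lp (S n) = Lp n + 1/2^(S n).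
Proof. unfold Lp. rewrite hS. lra. Qed.

Lemma Lp_le m n : (m <= n)%nat -> Lp m <= Lp n.
Proof.
  induction 1. lra. rewrite Lp_S. pose proof (hpos (S m0)). lra.
Qed.

Lemma Lp_lt_half n : Lp n < 1/2.
Proof. unfold Lp. pose proof (hpos n). lra. Qed.

Lemma Lp_1 : Lp 1 = 0.
Proof. unfold Lp. simpl. lra. Qed.

Lemma Lp_0 : Lp 0 = -1/2.
Proof. unfold Lp. simpl. lra. Qed.

Lemma Lp_nonneg n : (1 <= n)%nat -> 0 <= Lp n.
Proof. intro H. rewrite <- Lp_1. apply Lp_le; auto. Qed.

Lemma tent_zero_L m n : tent m (Lp n) = 0.
Proof.
  unfold tent. destruct (le_lt_dec n m) as [H|H].
  - pose proof (Lp_le _ _ H). pose proof (Lp_le _ _ (le_S _ _ (le_n m))).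
    unfold Rmax, Rmin; repeat destruct Rle_dec; lra.
  - assert (H' : (S m <= n)%nat) by lia. pose proof (Lp_le _ _ H').
    pose proof (Lp_le _ _ (le_S _ _ (le_n m))).
    unfold Rmax, Rmin; repeat destruct Rle_dec; lra.
Qed.

Lemma tent_zero_half m : tent m (1/2) = 0.
Proof.
  unfold tent. pose proof (Lp_lt_half (S m)).
  unfold Rmax, Rmin; repeat destruct Rle_dec; lra.
Qed.

Lemma tent_Cl m x y :
  Rabs (tent m x - tent m y) <= Rabs (Cl (Lp m) (Lp (S m)) x - Cl (Lp m) (Lp (S m)) y).
Proof.
  pose proof (Lp_le _ _ (le_S _ _ (le_n m))).
  unfold tent, Cl. unfold Rmax, Rmin; repeat destruct Rle_dec; unfold Rabs; repeat destruct Rcase_abs; lra.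
Qed.

Lemma Cl_mono a b x y : a <= b -> x <= y -> Cl a b x <= Cl a b y.
Proof. intros. unfold Cl, Rmax, Rmin; repeat destruct Rle_dec; lra. Qed.

Lemma psum_le (f g : nat -> R) n : (forall i, f i <= g i) -> psum f n <= psum g n.
Proof. intro H. induction n; simpl. lra. specialize (H n). lra. Qed.

Lemma psum_minus (f g : nat -> R) n : psum (fun i => f i - g i) n = psum f n - psum g n.
Proof. induction n; simpl. lra. rewrite IHn. lra. Qed.

Lemma psum_nonneg (f : nat -> R) n : (forall i, 0 <= f i) -> 0 <= psum f n.
Proof. intro H. induction n; simpl. lra. specialize (H n). lra. Qed.

Lemma tel x N : psum (fun m => Cl (Lp (S m)) (Lp (S (S m))) x - Lp (S m)) N = Cl 0 (Lp (S N)) x.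
Proof.
  induction N; simpl psum.
  - rewrite Lp_1. unfold Cl, Rmax, Rmin; repeat destruct Rle_dec; lra.
  - rewrite IHN. pose proof (Lp_nonneg (S N) ltac:(lia)).
    pose proof (Lp_le _ _ (le_S _ _ (le_n (S N)))).
    unfold Cl, Rmax, Rmin; repeat destruct Rle_dec; lra.
Qed.

Lemma B_bound s t N : psum (fun m => Rabs (tent (S m) s - tent (S m) t)) N <= Rabs (s - t).
Proof.
  assert (K : forall s t, s <= t -> psum (fun m => Rabs (tent (S m) s - tent (S m) t)) N <= t - s).
  { clear s t. intros s t Hst.
    eapply Rle_trans.
    { apply psum_le with (g := fun m => (Cl (Lp (S m)) (Lp (S (S m))) t - Lp (S m)) - (Cl (Lp (S m)) (Lp (S (S m))) s - Lp (S m))).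
      intro i. eapply Rle_trans. apply tent_Cl. rewrite Rabs_minus_sym.
      pose proof (Cl_mono (Lp (S i)) (Lp (S (S i))) s t (Lp_le _ _ (le_S _ _ (le_n _))) Hst).
      rewrite Rabs_right; lra. }
    rewrite psum_minus, !tel.
    pose proof (Lp_nonneg (S N) ltac:(lia)).
    unfold Cl, Rmax, Rmin; repeat destruct Rle_dec; lra. }
  destruct (Rle_dec s t) as [H|H].
  - rewrite Rabs_minus_sym, Rabs_right by lra. auto.
  - eapply Rle_trans with (psum (fun m => Rabs (tent (S m) t - tent (S m) s)) N).
    + apply psum_le. intro. rewrite Rabs_minus_sym. lra.
    + rewrite Rabs_right by lra. apply K. lra.
Qed.

Lemma series_bounds (a : nat -> R) (M : R) :
  (forall k, 0 <= a k) -> (forall N, sum_n a N <= M) -> forall N, sum_n a N <= Series a <= M.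
Proof.
  intros Ha HM N.
  assert (Hinc : forall n k, sum_n a n <= sum_n a (k + n)).
  { intros n k. induction k. simpl. lra. simpl. rewrite sum_Sn. unfold plus; simpl.
    specialize (Ha (S (k + n))). lra. }
  assert (H1 : Rbar_le (Lim_seq (sum_n a)) (Lim_seq (fun _ => M))).
  { apply Lim_seq_le_loc. exists O. intros; auto. }
  assert (H2 : Rbar_le (Lim_seq (fun _ => sum_n a N)) (Lim_seq (sum_n a))).
  { apply Lim_seq_le_loc. exists N. intros n Hn.
    replace n with ((n - N) + N)%nat by lia. apply Hinc. }
  rewrite Lim_seq_const in H1, H2. unfold Series.
  destruct (Lim_seq (sum_n a)); simpl in *; try contradiction; lra.
Qed.

Definition aseq s t := fun k => Rabs (phi s k - phi t k).

Lemma sum_formula s t N :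
  sum_n (aseq s t) (S N) = Rabs (s - t) + psum (fun m => Rabs (tent (S m) s - tent (S m) t)) N.
Proof.
  induction N.
  - rewrite sum_Sn, sum_O. unfold plus; simpl. unfold aseq; simpl. rewrite Rminus_0_r, Rabs_R0. lra.
  - rewrite sum_Sn, IHN. unfold plus; simpl. unfold aseq; simpl. lra.
Qed.

Lemma aseq_nonneg s t k : 0 <= aseq s t k.
Proof. apply Rabs_pos. Qed.

Lemma sum_bound s t N : sum_n (aseq s t) N <= 2 * Rabs (s - t).
Proof.
  destruct N. rewrite sum_O. unfold aseq; simpl. rewrite Rminus_0_r, Rabs_R0. pose proof (Rabs_pos (s-t)). lra.
  rewrite sum_formula. pose proof (B_bound s t N). lra.
Qed.

Lemma d_bounds s t : Rabs (s - t) <= dl1 (phi s) (phi t) <= 2 * Rabs (s - t).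
Proof.
  unfold dl1. fold (aseq s t).
  pose proof (series_bounds (aseq s t) _ (aseq_nonneg s t) (sum_bound s t) 1) as H.
  rewrite sum_formula in H. simpl psum in H. lra.
Qed.

Lemma d_exact s t : (forall m, tent m s = 0) -> (forall m, tent m t = 0) ->
  dl1 (phi s) (phi t) = Rabs (s - t).
Proof.
  intros Hs Ht. unfold dl1. fold (aseq s t).
  assert (HB : forall N, sum_n (aseq s t) N <= Rabs (s - t)).
  { intro N. destruct N. rewrite sum_O. unfold aseq; simpl. rewrite Rminus_0_r, Rabs_R0. apply Rabs_pos.
    rewrite sum_formula. assert (psum (fun m => Rabs (tent (S m) s - tent (S m) t)) N = 0).
    { induction N; simpl. auto. rewrite IHN, Hs, Ht. rewrite Rminus_0_r, Rabs_R0. lra. }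
    lra. }
  pose proof (series_bounds (aseq s t) _ (aseq_nonneg s t) HB 1) as H.
  rewrite sum_formula in H. simpl psum in H. lra.
Qed.

Lemma d_local s t m : (1 <= m)%nat ->
  Rabs (s - t) + Rabs (tent m s - tent m t) <= dl1 (phi s) (phi t).
Proof.
  intro Hm. unfold dl1. fold (aseq s t).
  pose proof (series_bounds (aseq s t) _ (aseq_nonneg s t) (sum_bound s t) (S m)) as H.
  rewrite sum_formula in H. destruct m. lia. simpl psum in H.
  pose proof (psum_nonneg (fun m => Rabs (tent (S m) s - tent (S m) t)) m (fun _ => Rabs_pos _)).
  lra.
Qed.
Lemma h_pow n : 1/2^n = (1/2)^n.
Proof. induction n; simpl. lra. rewrite <- IHn. field. apply pow_nonzero; lra. Qed.

Lemma exN_small r : 0 < r -> exists n, (1 <= n)%nat /\ 1/2^n < r.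
Proof.
  intro Hr. destruct (pow_lt_1_zero (1/2) ltac:(rewrite Rabs_right; lra) r Hr) as [N HN].
  exists (S N). split. lia. specialize (HN (S N) ltac:(lia)).
  rewrite h_pow. rewrite Rabs_right in HN; auto. apply Rle_ge, pow_le; lra.
Qed.

Lemma exN s : 0 < s < 1/2 -> exists m, (1 <= m)%nat /\ Lp m < s <= Lp (S m).
Proof.
  intro Hs. destruct (exN_small (1/2 - s) ltac:(lra)) as [N [_ HN]].
  assert (HsN : s <= Lp N) by (unfold Lp; lra). clear HN.
  induction N.
  - rewrite Lp_0 in HsN. lra.
  - destruct (Rle_dec s (Lp N)) as [H|H]. auto.
    destruct N. rewrite Lp_1 in HsN. lra.
    exists (S N). split. lia. lra.
Qed.

Lemma tent_form n t : (1 <= n)%nat -> 0 <= t <= 1 ->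
  (fun k => 1 / 2 ^ (n + 1) * (t * e 1 k + alpha t * e (n + 1) k) + xn n k)
  = phi (Lp n + t * (1 / 2 ^ (S n))).
Proof.
  intros Hn Ht. replace (n + 1)%nat with (S n) by lia.
  pose proof (hpos (S n)) as Hh. pose proof (Lp_S n) as HL.
  apply functional_extensionality. intro k. unfold xn, e.
  destruct k as [|[|k]].
  - simpl. lra.
  - destruct n. lia. simpl Nat.eqb. cbv iota. unfold phi. unfold Lp. lra.
  - destruct (Nat.eqb_spec (S k) n) as [E|E].
    + subst n. simpl Nat.eqb. rewrite Nat.eqb_refl. cbv iota. unfold phi. cbv beta iota. unfold tent. rewrite HL. unfold alpha.
      set (h := 1 / 2 ^ S (S k)) in *.
      destruct (Rle_dec t (1/2)); unfold Rmax, Rmin; repeat destruct Rle_dec; nra.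
    + rewrite (proj2 (Nat.eqb_neq (S (S k)) (S n)) ltac:(lia)). simpl Nat.eqb. cbv iota. unfold phi. cbv beta iota. unfold tent. destruct (le_lt_dec (S k) n) as [H|H].
      * assert (H' : (S (S k) <= n)%nat) by lia. pose proof (Lp_le _ _ H').
        assert (0 <= t * (1 / 2 ^ S n)) by (apply Rmult_le_pos; lra).
        unfold Rmax, Rmin; repeat destruct Rle_dec; nra.
      * assert (H' : (S n <= S k)%nat) by lia. pose proof (Lp_le _ _ H').
        assert (t * (1 / 2 ^ S n) <= 1/2^S n) by nra.
        unfold Rmax, Rmin; repeat destruct Rle_dec; nra.
Qed.

Lemma phi_half : phi (1/2) = xinf.
Proof.
  apply functional_extensionality. intro k. unfold xinf, e.
  destruct k as [|[|k]]; simpl; try lra. rewrite tent_zero_half. lra.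
Qed.

Lemma P1 s : 0 <= s <= 1/2 -> Xspace (phi s).
Proof.
  intro Hs. destruct (Req_dec s (1/2)) as [E|E].
  - right. subst. apply phi_half.
  - left. assert (exists n, (1 <= n)%nat /\ Lp n <= s <= Lp (S n)) as [n [Hn Hsn]].
    { destruct (Req_dec s 0). exists 1%nat. rewrite Lp_1. split. lia. split. lra.
      pose proof (Lp_nonneg 2 ltac:(lia)). lra.
      destruct (exN s ltac:(lra)) as [m [Hm Hms]]. exists m. split; auto. lra. }
    exists n. split; auto. pose proof (hpos (S n)). rewrite Lp_S in Hsn.
    exists ((s - Lp n) / (1/2^(S n))). split.
    + split. apply Rmult_le_pos. lra. left; apply Rinv_0_lt_compat; lra.
      apply Rmult_le_reg_r with (1/2^(S n)). lra. unfold Rdiv at 1. rewrite Rmult_assoc, Rinv_l by lra. lra.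
    + assert (Hdm : forall a h, h <> 0 -> a / h * h = a) by (intros; field; auto).
      rewrite tent_form; auto. f_equal. rewrite Hdm by lra. ring.
      split. apply Rmult_le_pos. lra. left; apply Rinv_0_lt_compat; lra.
      apply Rmult_le_reg_r with (1/2^(S n)). lra. unfold Rdiv at 1. rewrite Rmult_assoc, Rinv_l by lra. lra.
Qed.

Lemma P2 z : Xspace z -> exists s, 0 <= s <= 1/2 /\ z = phi s.
Proof.
  intros [[n [Hn [t [Ht ->]]]] | ->].
  - rewrite tent_form by auto. eexists; split; [|reflexivity].
    pose proof (Lp_nonneg n Hn). pose proof (Lp_S n). pose proof (Lp_lt_half (S n)). pose proof (hpos (S n)).
    split. nra. nra.
  - exists (1/2). split. lra. symmetry; apply phi_half.
Qed.

Lemma phi_inj s t : phi s = phi t -> s = t.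
Proof. intro H. apply (f_equal (fun z => z 1%nat)) in H. exact H. Qed.

Lemma d_loc2 s m : (1 <= m)%nat -> Lp m < s <= Lp (S m) ->
  exists delta, 0 < delta /\ forall t, s - delta < t <= s -> 2 * (s - t) <= dl1 (phi s) (phi t).
Proof.
  intros Hm Hs.
  destruct (Rle_dec s ((Lp m + Lp (S m)) / 2)) as [H|H].
  - exists (s - Lp m). split. lra. intros t Ht.
    pose proof (d_local s t m Hm). 
    assert (Rabs (tent m s - tent m t) = s - t).
    { unfold tent, Rmax, Rmin; repeat destruct Rle_dec; unfold Rabs; repeat destruct Rcase_abs; lra. }
    rewrite Rabs_right in H0 by lra. lra.
  - exists (s - (Lp m + Lp (S m)) / 2). split. lra. intros t Ht.
    pose proof (d_local s t m Hm).
    assert (Rabs (tent m s - tent m t) = s - t).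
    { unfold tent, Rmax, Rmin; repeat destruct Rle_dec; unfold Rabs; repeat destruct Rcase_abs; lra. }
    rewrite Rabs_right in H0 by lra. lra.
Qed.
Lemma glb_lb (E : Rbar -> Prop) x : E x -> Rbar_le (Rbar_glb E) x.
Proof. intro H. unfold Rbar_glb. pose proof (proj2_sig (Rbar_ex_glb E)) as [Hl _]. apply Hl; auto. Qed.

Lemma glb_greatest (E : Rbar -> Prop) b : Rbar_is_lower_bound E b -> Rbar_le b (Rbar_glb E).
Proof. intro H. unfold Rbar_glb. pose proof (proj2_sig (Rbar_ex_glb E)) as [_ Hl]. apply Hl; auto. Qed.

Lemma d_pos s t : s <> t -> 0 < dl1 (phi s) (phi t).
Proof. intro H. pose proof (d_bounds s t). pose proof (Rabs_pos_lt (s - t) ltac:(lra)). lra. Qed.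

Lemma quasi : quasiconvex Xspace dl1 2.
Proof.
  split. lra. intros x y Hx Hy.
  destruct (P2 x Hx) as [a [Ha ->]]. destruct (P2 y Hy) as [b [Hb ->]].
  set (sg := if Rle_dec a b then 1 else -1).
  set (Tm := Rabs (b - a)).
  set (gam := fun tau => phi (a + sg * tau)).
  assert (HsT : sg * Tm = b - a).
  { unfold sg, Tm. destruct Rle_dec; unfold Rabs; destruct Rcase_abs; lra. }
  assert (Hsg : forall s t, Rabs (a + sg * s - (a + sg * t)) = Rabs (s - t)).
  { intros. replace (a + sg * s - (a + sg * t)) with (sg * (s - t)) by ring.
    rewrite Rabs_mult. unfold sg. destruct Rle_dec; rewrite ?Rabs_R1, ?Rabs_m1; lra. }
  assert (Hdg : forall s t, dl1 (gam s) (gam t) <= 2 * Rabs (s - t)).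
  { intros. unfold gam. pose proof (d_bounds (a + sg * s) (a + sg * t)). rewrite Hsg in H. lra. }
  assert (HTm : 0 <= Tm) by apply Rabs_pos.
  assert (Hlen : Rbar_le (curve_length dl1 gam Tm) (Finite (2 * Tm))).
  { unfold curve_length. destruct (Lub_Rbar_correct (fun s => exists n p, is_partition Tm n p /\
       s = psum (fun i => dl1 (gam (p i)) (gam (p (S i)))) n)) as [_ Hl].
    apply Hl. intros z [n [p [[Hp0 [Hpn Hpm]] Hz]]]. rewrite Hz. simpl.
    assert (K : forall m, (m <= n)%nat -> psum (fun i => dl1 (gam (p i)) (gam (p (S i)))) m <= 2 * (p m - p O)).
    { induction m; intros Hm; simpl. lra.
      specialize (IHm ltac:(lia)). specialize (Hpm m ltac:(lia)).
      pose proof (Hdg (p m) (p (S m))). rewrite Rabs_minus_sym, Rabs_right in H by lra. lra. }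
    specialize (K n (le_n n)). rewrite Hpn, Hp0 in K. lra. }
  assert (Hint : Rbar_le (d_intr Xspace dl1 (phi a) (phi b)) (curve_length dl1 gam Tm)).
  { unfold d_intr. apply glb_lb. exists gam, Tm. split; auto. split; [|split; [|split; [|split]]].
    - intros t Ht. unfold gam. apply P1. unfold sg in *. destruct Rle_dec; unfold Tm in Ht;
      unfold Rabs in Ht; destruct Rcase_abs in Ht; lra.
    - intros s Hs eps Heps. exists (eps / 3). split. lra. intros t Ht Hst.
      pose proof (Hdg s t). rewrite Rabs_minus_sym in Hst. lra.
    - unfold gam. f_equal. ring.
    - unfold gam. f_equal. rewrite HsT. ring.
    - reflexivity. }
  eapply Rbar_le_trans. apply Hint. eapply Rbar_le_trans. apply Hlen. simpl.
  pose proof (d_bounds a b). unfold Tm. rewrite Rabs_minus_sym. lra.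
Qed.

Lemma compactX : compact_sp Xspace dl1.
Proof.
  intros C HCo HCcov.
  assert (Hpt : forall a : R, exists p : (seqR -> Prop) * R, (0 <= a <= 1/2) ->
     C (fst p) /\ 0 < snd p /\ forall y, Xspace y -> dl1 (phi a) y < snd p -> fst p y).
  { intro a. destruct (classic (0 <= a <= 1/2)) as [Ha|Ha].
    - destruct (HCcov (phi a) (P1 a Ha)) as [V [HV HVa]]. destruct (HCo V HV) as [_ Hop].
      destruct (Hop _ HVa) as [r [Hr Hr']]. exists (V, r). intros _; simpl; auto.
    - exists ((fun _ => False), 1). intro; contradiction. }
  destruct (choice _ Hpt) as [F HF].
  assert (Hcf : forall x : R, (exists y : R, (0 <= x <= 1/2 /\ Rabs (y - x) < snd (F x) / 2)) -> 0 <= x <= 1/2).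
  { intros x [y [H _]]. auto. }
  set (fam := mkfamily (fun a => 0 <= a <= 1/2) (fun a b => 0 <= a <= 1/2 /\ Rabs (b - a) < snd (F a) / 2) Hcf).
  destruct (compact_P3 0 (1/2) fam) as [D [Hcov Hfin]].
  - split.
    + intros x Hx. exists x. simpl. split; auto. rewrite Rminus_diag, Rabs_R0.
      destruct (HF x Hx) as [_ [H _]]. lra.
    + intros a b [Ha Hb]. 
      assert (Hp : 0 < snd (F a) / 2 - Rabs (b - a)) by lra.
      exists (mkposreal _ Hp). intros y Hy. unfold disc in Hy. simpl in Hy. simpl. split; auto.
      pose proof (Rabs_triang (y - b) (b - a)). replace (y - b + (b - a)) with (y - a) in H by ring. lra.
  - destruct Hfin as [l Hl]. exists (map (fun a => fst (F a)) l). split.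
    + intros V HV. apply in_map_iff in HV as [a [<- Ha]]. apply Hl in Ha as [Hia _]. apply (HF a Hia).
    + intros z Hz. destruct (P2 z Hz) as [b [Hb ->]]. destruct (Hcov b Hb) as [a [[Hia Hab] HDa]].
      exists (fst (F a)). split.
      * apply (in_map (fun a => fst (F a))). apply Hl. split; auto.
      * destruct (HF a Hia) as [_ [Hr HV]]. apply HV. apply P1; auto.
        pose proof (d_bounds a b). rewrite Rabs_minus_sym in Hab. lra.
Qed.
Lemma descent {T : Type} (d : T -> T -> R) (A : T -> Prop) (u : T -> R) (xb : T) :
  slope d A u xb = Finite 1 -> forall r, 0 < r ->
  exists x, A x /\ x <> xb /\ d xb x < r /\ 3/4 < Rmax (u xb - u x) 0 / d xb x.
Proof.
  unfold slope. destruct (excluded_middle_informative _) as [_|Hni].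
  { intro H. injection H. lra. }
  intros Hg r Hr.
  set (W := fun w => exists x, A x /\ x <> xb /\ d xb x < r /\ w = Rmax (u xb - u x) 0 / d xb x).
  assert (Hle : Rbar_le (Finite 1) (Lub_Rbar W)).
  { rewrite <- Hg. apply glb_lb. exists r. split; auto. }
  destruct (classic (exists w, W w /\ 3/4 < w)) as [[w [[x [Ax [Hx [Hd ->]]]] Hw]]|Hn].
  - exists x; auto.
  - exfalso. destruct (Lub_Rbar_correct W) as [_ Hl].
    assert (Hub : Rbar_le (Lub_Rbar W) (Finite (3/4))).
    { apply Hl. intros w Hw. simpl. apply Rnot_lt_le. intro. apply Hn. eauto. }
    pose proof (Rbar_le_trans _ _ _ Hle Hub). simpl in H. lra.
Qed.

Lemma ascent {T : Type} (d : T -> T -> R) (A : T -> Prop) (u : T -> R) (xb : T) :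
  slope d A u xb = Finite 1 -> exists r, 0 < r /\ forall x, A x -> x <> xb -> d xb x < r ->
  Rmax (u xb - u x) 0 / d xb x < 5/4.
Proof.
  unfold slope. destruct (excluded_middle_informative _) as [_|Hni].
  { intro H. injection H. lra. }
  intros Hg.
  set (E := fun v => exists r, 0 < r /\ v = Lub_Rbar (fun w => exists x, A x /\ x <> xb /\ d xb x < r /\
              w = Rmax (u xb - u x) 0 / d xb x)).
  fold E in Hg.
  destruct (classic (exists v, E v /\ Rbar_lt v (Finite (5/4)))) as [[v [[r [Hr ->]] Hv]]|Hn].
  - exists r. split; auto. intros x Ax Hx Hd.
    destruct (Lub_Rbar_correct (fun w => exists x, A x /\ x <> xb /\ d xb x < r /\
              w = Rmax (u xb - u x) 0 / d xb x)) as [Hu _].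
    assert (Hw := Hu (Rmax (u xb - u x) 0 / d xb x) ltac:(exists x; auto)).
    destruct (Lub_Rbar _); simpl in *; try contradiction; lra.
  - exfalso. assert (Hlb : Rbar_is_lower_bound E (Finite (5/4))).
    { intros v Hv. apply Rbar_not_lt_le. intro. apply Hn. eauto. }
    pose proof (glb_greatest E _ Hlb). rewrite Hg in H. simpl in H. lra.
Qed.

Lemma ratio_lo D dd : 0 < dd -> 3/4 < Rmax D 0 / dd -> 3/4 * dd < D.
Proof.
  intros Hd H. assert (Rmax D 0 = Rmax D 0 / dd * dd) by (field; lra).
  unfold Rmax in *. destruct Rle_dec; nra.
Qed.

Lemma ratio_hi D dd : 0 < dd -> Rmax D 0 / dd < 5/4 -> D < 5/4 * dd.
Proof.
  intros Hd H. assert (Rmax D 0 = Rmax D 0 / dd * dd) by (field; lra).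
  unfold Rmax in *. destruct Rle_dec; nra.
Qed.

Definition Om (x : seqR) : Prop := exists s, 0 < s <= 1/2 /\ x = phi s.

Lemma clos_phi s : 0 <= s <= 1/2 -> closure_in Xspace dl1 Om (phi s).
Proof.
  intro Hs. split. apply P1; auto. intros r Hr.
  destruct (Req_dec s 0) as [E|E].
  - exists (phi (Rmin (r/4) (1/2))). split.
    + exists (Rmin (r/4) (1/2)). split; auto. unfold Rmin; destruct Rle_dec; lra.
    + pose proof (d_bounds s (Rmin (r/4) (1/2))). subst.
      unfold Rmin in *; destruct Rle_dec; unfold Rabs in *; destruct Rcase_abs; lra.
  - exists (phi s). split. exists s; split; auto; lra.
    pose proof (d_bounds s s). rewrite Rminus_diag, Rabs_R0 in H. lra.
Qed.

Lemma Cl_lip x y : Rabs (Cl 0 (1/2) x - Cl 0 (1/2) y) <= Rabs (x - y).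
Proof. unfold Cl, Rmax, Rmin; repeat destruct Rle_dec; unfold Rabs; repeat destruct Rcase_abs; lra. Qed.

Lemma Cl_id x : 0 <= x <= 1/2 -> Cl 0 (1/2) x = x.
Proof. intro. unfold Cl, Rmax, Rmin; repeat destruct Rle_dec; lra. Qed.

Lemma Cl_range x : 0 <= Cl 0 (1/2) x <= 1/2.
Proof. unfold Cl, Rmax, Rmin; repeat destruct Rle_dec; lra. Qed.

Lemma not_eik : ~ eikonal_space Xspace dl1.
Proof.
  intro HE.
  destruct (HE Om (fun _ => 1) (fun _ => 0)) as [u [Hc [Hsl _]]].
  - split.
    + intros x [s [Hs ->]]. apply P1. lra.
    + intros x [s [Hs ->]]. exists s. split. lra. intros y Hy Hd.
      destruct (P2 y Hy) as [t [Ht ->]]. exists t. split; auto.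
      pose proof (d_bounds s t). unfold Rabs in *; destruct Rcase_abs; lra.
  - exists (phi (1/2)). exists (1/2). split; auto; lra.
  - exists (phi 0). split. apply P1; lra. intros [s [Hs Hq]]. apply phi_inj in Hq. lra.
  - exists 1. intros. rewrite Rabs_R1. lra.
  - intros x _ eps Heps. exists 1. split. lra. intros. rewrite Rminus_diag, Rabs_R0. auto.
  - assert (Glb_Rbar (fun v => exists x, Om x /\ v = 1) = Finite 1) as ->.
    { apply is_glb_Rbar_unique. split.
      - intros v [x [_ ->]]. simpl. lra.
      - intros b Hb. apply Hb. exists (phi (1/2)). split; auto. exists (1/2). split; auto. lra. }
    simpl. lra.
  - intros x y _ _ gam Tm HTm _ _ _ _ _. rewrite RInt_const. unfold scal; simpl. unfold mult; simpl. lra.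
  -
    simpl in Hsl.
    assert (Hslope : forall s, 0 < s <= 1/2 -> slope dl1 (closure_in Xspace dl1 Om) u (phi s) = Finite 1).
    { intros s Hs. apply Hsl. exists s; auto. }
    assert (Hdesc : forall s, 0 < s <= 1/2 -> forall r, 0 < r -> exists t, 0 <= t <= 1/2 /\ t <> s /\
              Rabs (t - s) < r /\ 3/4 * dl1 (phi s) (phi t) < u (phi s) - u (phi t)).
    { intros s Hs r Hr. destruct (descent _ _ _ _ (Hslope s Hs) r Hr) as [x [[Hx _] [Hne [Hd Hq]]]].
      destruct (P2 x Hx) as [t [Ht ->]]. exists t.
      assert (t <> s) by (intro; subst; auto).
      pose proof (d_bounds s t). pose proof (d_pos s t ltac:(auto)).
      split; auto. split; auto. split. rewrite Rabs_minus_sym. lra.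
      apply ratio_lo; auto. }
    set (fu := fun s => u (phi (Cl 0 (1/2) s))).
    assert (Hfu : forall s, 0 <= s <= 1/2 -> fu s = u (phi s)).
    { intros. unfold fu. rewrite Cl_id; auto. }
    assert (Hcont : forall c, continuity_pt fu c).
    { intros c eps Heps.
      destruct (Hc (phi (Cl 0 (1/2) c)) (clos_phi _ (Cl_range c)) eps Heps) as [delta [Hdel Hdd]].
      exists (delta / 3). split. lra. intros y [_ Hy]. simpl in *. unfold Rdist in *.
      unfold fu. rewrite Rabs_minus_sym. apply Hdd. apply clos_phi, Cl_range.
      pose proof (d_bounds (Cl 0 (1/2) c) (Cl 0 (1/2) y)). pose proof (Cl_lip c y).
      rewrite Rabs_minus_sym in Hy. lra. }
    assert (Mono : forall a b, 0 <= a <= b -> b <= 1/2 -> u (phi a) <= u (phi b)).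
    { intros a b Hab Hb.
      destruct (continuity_ab_min fu a (1/2) ltac:(lra) (fun c _ => Hcont c)) as [mx [Hmin Hmx]].
      destruct (Req_dec mx a) as [E|E].
      - subst mx. specialize (Hmin b ltac:(lra)). rewrite !Hfu in Hmin by lra. auto.
      - destruct (Hdesc mx ltac:(lra) (mx - a) ltac:(lra)) as [t [Ht [Htn [Hta Hq]]]].
        specialize (Hmin t ltac:(unfold Rabs in Hta; destruct Rcase_abs in Hta; lra)).
        rewrite !Hfu in Hmin by lra. pose proof (d_pos mx t ltac:(auto)). lra. }
    assert (Grow : forall a b, 0 <= a <= b -> b < 1/2 -> 3/2 * (b - a) <= u (phi b) - u (phi a)).
    { intros a b Hab Hb.
      set (g := fun s => fu s - 3/2 * s).
      assert (Hgc : forall c, continuity_pt g c).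
      { intro c. apply continuity_pt_minus. apply Hcont. apply continuity_pt_scal. apply derivable_continuous_pt, derivable_pt_id. }
      destruct (continuity_ab_min g a b ltac:(lra) (fun c _ => Hgc c)) as [mx [Hmin Hmx]].
      destruct (Req_dec mx a) as [E|E].
      - subst mx. specialize (Hmin b ltac:(lra)). unfold g in Hmin. rewrite !Hfu in Hmin by lra. lra.
      - exfalso.
        destruct (exN mx ltac:(lra)) as [m [Hm Hmm]].
        destruct (d_loc2 mx m Hm Hmm) as [delta [Hdel Hloc]].
        destruct (Hdesc mx ltac:(lra) (Rmin delta (mx - a)) ltac:(unfold Rmin; destruct Rle_dec; lra))
          as [t [Ht [Htn [Hta Hq]]]].
        pose proof (d_pos mx t ltac:(auto)).
        assert (Htl : t < mx).
        { destruct (Rlt_dec t mx); auto. pose proof (Mono mx t ltac:(lra) ltac:(lra)). lra. }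
        assert (Hr1 : mx - t < delta /\ mx - t < mx - a).
        { unfold Rmin in Hta; destruct Rle_dec in Hta; unfold Rabs in Hta; destruct Rcase_abs in Hta; lra. }
        specialize (Hloc t ltac:(lra)).
        specialize (Hmin t ltac:(lra)). unfold g in Hmin. rewrite !Hfu in Hmin by lra. lra. }
    destruct (ascent _ _ _ _ (Hslope (1/2) ltac:(lra))) as [r [Hr Hasc]].
    destruct (exN_small r Hr) as [n [Hn Hnr]].
    pose proof (Lp_nonneg n Hn). pose proof (Lp_lt_half n).
    assert (Hd : dl1 (phi (1/2)) (phi (Lp n)) = 1/2^n).
    { rewrite d_exact. unfold Lp. rewrite Rabs_right; pose proof (hpos n); lra.
      apply tent_zero_half. intro; apply tent_zero_L. }
    assert (Hne : phi (Lp n) <> phi (1/2)).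
    { intro Hq. apply phi_inj in Hq. lra. }
    assert (Hcl : closure_in Xspace dl1 Om (phi (Lp n))) by (apply clos_phi; lra).
    specialize (Hasc (phi (Lp n)) Hcl Hne ltac:(rewrite Hd; lra)).
    rewrite Hd in Hasc. apply ratio_hi in Hasc; [|apply hpos].
    set (b := Lp n + 5/6 * (1/2 - Lp n)).
    pose proof (Grow (Lp n) b ltac:(unfold b; lra) ltac:(unfold b; lra)).
    pose proof (Mono b (1/2) ltac:(unfold b; lra) ltac:(lra)).
    unfold b, Lp in *. lra.
Qed.

Theorem proposition4p4 :
  compact_sp Xspace dl1 /\ quasiconvex Xspace dl1 2 /\ ~ eikonal_space Xspace dl1.
Proof.
  split. apply compactX. split. apply quasi. apply not_eik.
Qed.
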